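(* Let $X,Y$ be finite-dimensional complex spaces endowed with distances compatible with their topologies and let $\phi:X\to Y$ be a proper holomorphic map (locally Lipschitz, so that pushforwards are defined). Let $T\in\mathcal D_k(X)$ be a current for which $\partial T$ and $\overline{\partial}T$ are defined. Then $\partial\phi_\sharp T$ and $\overline\partial\phi_\sharp T$ are defined and $$\phi_\sharp\partial T=\partial\phi_\sharp T,\qquad \phi_\sharp\overline{\partial}T=\overline{\partial}\phi_\sharp T.$$
   Context: All functions are complex-valued. For a locally compact metric space $X$: $\mathcal D(X)$ = Lipschitz functions with compact support, $\mathcal D^m(X)=\mathcal D(X)\times[\mathrm{Lip}_{\mathrm{loc}}(X)]^m$. A local $m$-dimensional metric current (Lang) is a multilinear functional $T:\mathcal D^m(X)\to\mathbb C$, continuous under pointwise convergence with first entries supported in a fixed compact set and locally uniformly bounded Lipschitz constants, and local ($T(f,\pi)=0$ if some $\pi_j$ is constant near $\mathrm{supp} f$); space $\mathcal D_m(X)$. Boundary: $dT(f,\pi_1,\dots,\pi_{m-1})=T(\sigma,f,\pi_1,\dots,\pi_{m-1})$ with $\sigma\in\mathcal D(X)$ equal to $1$ on a neighbourhood of $\mathrm{supp} f$. Pushforward by proper locally Lipschitz $\phi$: $\phi_\sharp T(f,\pi)=T(f\circ\phi,\pi\circ\phi)$. $T\in\mathcal D_k(X)$ has bidimension $(p,q)$, $p+q=k$, if $T(f,\pi)=0$ whenever $p+1$ of the $\pi_j$ are holomorphic, or $q+1$ of the $\overline{\pi_j}$ are holomorphic, on an open set containing $\mathrm{supp} f$; space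 $\mathcal D_{p,q}(X)$. A Dolbeault decomposition of $S\in\mathcal D_m(X)$ is $S=\sum_{p+q=m}S_{p,q}$ with $S_{p,q}\in\mathcal D_{p,q}(X)$ (it is unique when it exists). If $T\in\mathcal D_{p,q}(X)$ and $dT$ admits a Dolbeault decomposition, then this decomposition has only components of bidimension $(p,q-1)$ and $(p-1,q)$, and one sets $\partial T=(dT)_{p-1,q}$, $\overline\partial T=(dT)_{p,q-1}$. For a general $T$, $\partial T$ and $\overline\partial T$ are defined when $T$ admits a Dolbeault decomposition $T=\sum T_{p,q}$ such that each $dT_{p,q}$ admits a Dolbeault decomposition; then $\partial T=\sum\partial T_{p,q}$, $\overline\partial T=\sum\overline\partial T_{p,q}$. *)

(* Defs.v *)
From HB Require Import structures.
From mathcomp Require Import all_boot all_order all_algebra.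
From mathcomp Require Import complex.
From mathcomp Require Import reals.
Set Implicit Arguments. Unset Strict Implicit. Unset Printing Implicit Defensive.
Import Order.TTheory GRing.Theory Num.Theory.
Local Open Scope ring_scope.

Definition cnorm (R : realType) (z : R[i]) : R := Normc.normc z.

Definition cvgC (R : realType) (u : nat -> R[i]) (l : R[i]) : Prop :=
  forall eps : R, 0 < eps -> exists N : nat, forall j, (N <= j)%N -> cnorm (u j - l) < eps.

Definition is_metric (R : realType) (X : Type) (d : X -> X -> R) : Prop :=
  (forall x y, 0 <= d x y) /\ (forall x y, d x y = 0 <-> x = y) /\
  (forall x y, d x y = d y x) /\ (forall x y z, d x z <= d x y + d y z).

Definition mopen (R : realType) (X : Type) (d : X -> X -> R) (U : X -> Prop) : Prop :=
  forall x, U x -> exists r : R, 0 < r /\ forall y, d x y < r -> U y.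

Definition mcompact (R : realType) (X : Type) (d : X -> X -> R) (K : X -> Prop) : Prop :=
  forall (I : Type) (O : I -> X -> Prop), (forall i, mopen d (O i)) ->
    (forall x, K x -> exists i, O i x) ->
    exists (n : nat) (g : 'I_n -> I), forall x, K x -> exists j, O (g j) x.

Definition mclosure (R : realType) (X : Type) (d : X -> X -> R) (S : X -> Prop) (x : X) : Prop :=
  forall r : R, 0 < r -> exists y, S y /\ d x y < r.

Definition supp (R : realType) (X : Type) (d : X -> X -> R) (f : X -> R[i]) : X -> Prop :=
  mclosure d (fun x => f x != 0).

Definition lipschitz_on (R : realType) (X : Type) (d : X -> X -> R) (S : X -> Prop) (L : R)
  (f : X -> R[i]) : Prop :=
  forall x y, S x -> S y -> cnorm (f x - f y) <= L * d x y.

Definition Dfun (R : realType) (X : Type) (d : X -> X -> R) (f : X -> R[i]) : Prop :=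
  (exists L : R, lipschitz_on d (fun _ => True) L f) /\ mcompact d (supp d f).

Definition liploc (R : realType) (X : Type) (d : X -> X -> R) (f : X -> R[i]) : Prop :=
  forall x, exists r L : R, 0 < r /\ lipschitz_on d (fun y => d x y < r) L f.

Definition Dm (R : realType) (X : Type) (d : X -> X -> R) (m : nat)
  (f : X -> R[i]) (pi : 'I_m -> X -> R[i]) : Prop :=
  Dfun d f /\ forall i, liploc d (pi i).

Definition vnorm (R : realType) (n : nat) (v : 'rV[R[i]]_n) : R :=
  \big[Num.max/0]_(i < n) cnorm (v 0 i).

Definition copen (R : realType) (n : nat) (W : 'rV[R[i]]_n -> Prop) : Prop :=
  forall a, W a -> exists r : R, 0 < r /\ forall z, vnorm (z - a) < r -> W z.

Definition holo (R : realType) (n : nat) (W : 'rV[R[i]]_n -> Prop) (g : 'rV[R[i]]_n -> R[i]) : Prop :=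
  copen W /\
  forall a, W a -> exists l : 'rV[R[i]]_n, forall eps : R, 0 < eps -> exists del : R, 0 < del /\
    forall z, W z -> vnorm (z - a) < del ->
      cnorm (g z - g a - \sum_(i < n) l 0 i * (z - a) 0 i) <= eps * vnorm (z - a).

Definition analytic_in (R : realType) (n : nat) (D A : 'rV[R[i]]_n -> Prop) : Prop :=
  copen D /\ (forall z, A z -> D z) /\
  forall a, D a -> exists W : 'rV[R[i]]_n -> Prop, W a /\ (forall z, W z -> D z) /\
    exists (r : nat) (g : 'I_r -> 'rV[R[i]]_n -> R[i]), (forall i, holo W (g i)) /\
      forall z, W z -> (A z <-> forall i, g i z = 0).

(* (Reduced) complex spaces: atlas of local models (analytic subsets   *)
(* of domains in C^n) with holomorphic transition maps.                *)
Record chart (R : realType) (X : Type) := Chart {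
  ch_n : nat;
  ch_U : X -> Prop;
  ch_D : 'rV[R[i]]_ch_n -> Prop;
  ch_A : 'rV[R[i]]_ch_n -> Prop;
  ch_h : X -> 'rV[R[i]]_ch_n;
  ch_k : 'rV[R[i]]_ch_n -> X }.
Arguments ch_n {R X} c.
Arguments ch_U {R X} c _.
Arguments ch_D {R X} c _.
Arguments ch_A {R X} c _.
Arguments ch_h {R X} c _.
Arguments ch_k {R X} c _.

Definition chart_ok (R : realType) (X : Type) (d : X -> X -> R) (c : chart R X) : Prop :=
  mopen d (ch_U c) /\ analytic_in (ch_D c) (ch_A c) /\
  (forall x, ch_U c x -> ch_A c (ch_h c x) /\ ch_k c (ch_h c x) = x) /\
  (forall z, ch_A c z -> ch_U c (ch_k c z) /\ ch_h c (ch_k c z) = z) /\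
  (forall x, ch_U c x -> forall eps : R, 0 < eps -> exists del : R, 0 < del /\
     forall y, ch_U c y -> d x y < del -> vnorm (ch_h c y - ch_h c x) < eps) /\
  (forall z, ch_A c z -> forall eps : R, 0 < eps -> exists del : R, 0 < del /\
     forall w, ch_A c w -> vnorm (w - z) < del -> d (ch_k c z) (ch_k c w) < eps).

Definition charts_compatible (R : realType) (X : Type) (c1 c2 : chart R X) : Prop :=
  forall x, ch_U c1 x -> ch_U c2 x ->
    exists W : 'rV[R[i]]_(ch_n c1) -> Prop, W (ch_h c1 x) /\ (forall z, W z -> ch_D c1 z) /\
      exists G : 'I_(ch_n c2) -> 'rV[R[i]]_(ch_n c1) -> R[i], (forall j, holo W (G j)) /\
        forall z, ch_A c1 z -> W z ->
          ch_U c2 (ch_k c1 z) /\ forall j, G j z = ch_h c2 (ch_k c1 z) 0 j.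

Definition hol_on (R : realType) (X : Type) (Atl : chart R X -> Prop)
  (U : X -> Prop) (g : X -> R[i]) : Prop :=
  forall c, Atl c -> forall x, U x -> ch_U c x ->
    exists W : 'rV[R[i]]_(ch_n c) -> Prop, W (ch_h c x) /\ (forall z, W z -> ch_D c z) /\
      exists G, holo W G /\
        forall z, ch_A c z -> W z -> U (ch_k c z) /\ G z = g (ch_k c z).

(* finite dimension: there is dd such that every point is an isolated point of
   the fibre of some holomorphic map to C^dd defined near it (dim_x X <= dd) *)
Definition finite_dimensional (R : realType) (X : Type) (d : X -> X -> R)
  (Atl : chart R X -> Prop) : Prop :=
  exists dd : nat, forall x, exists (U : X -> Prop) (g : 'I_dd -> X -> R[i]),
    mopen d U /\ U x /\ (forall i, hol_on Atl U (g i)) /\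
    exists r : R, 0 < r /\ forall y, U y -> d x y < r -> (forall i, g i y = g i x) -> y = x.

Definition complex_space (R : realType) (X : Type) (d : X -> X -> R)
  (Atl : chart R X -> Prop) : Prop :=
  is_metric d /\ (forall c, Atl c -> chart_ok d c) /\
  (forall x, exists c, Atl c /\ ch_U c x) /\
  (forall c1 c2, Atl c1 -> Atl c2 -> charts_compatible c1 c2) /\
  finite_dimensional d Atl.

Definition hol_map (R : realType) (X Y : Type) (dX : X -> X -> R) (AX : chart R X -> Prop)
  (dY : Y -> Y -> R) (AY : chart R Y -> Prop) (phi : X -> Y) : Prop :=
  (forall x (eps : R), 0 < eps -> exists del : R, 0 < del /\
     forall y, dX x y < del -> dY (phi x) (phi y) < eps) /\
  (forall (V : Y -> Prop) (g : Y -> R[i]), mopen dY V -> hol_on AY V g ->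
     hol_on AX (fun x => V (phi x)) (fun x => g (phi x))).

Definition proper_map (R : realType) (X Y : Type) (dX : X -> X -> R) (dY : Y -> Y -> R)
  (phi : X -> Y) : Prop :=
  forall K : Y -> Prop, mcompact dY K -> mcompact dX (fun x => K (phi x)).

Definition loc_lipschitz_map (R : realType) (X Y : Type) (dX : X -> X -> R) (dY : Y -> Y -> R)
  (phi : X -> Y) : Prop :=
  forall x, exists r L : R, 0 < r /\
    forall y z, dX x y < r -> dX x z < r -> dY (phi y) (phi z) <= L * dX y z.

(* Local metric currents (Lang).                                       *)
Definition fnl (R : realType) (X : Type) (m : nat) : Type :=
  (X -> R[i]) -> ('I_m -> X -> R[i]) -> R[i].

Definition upd (R : realType) (X : Type) (m : nat) (pi : 'I_m -> X -> R[i]) (i : 'I_m)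
  (u : X -> R[i]) : 'I_m -> X -> R[i] :=
  fun j => if j == i then u else pi j.

Definition current (R : realType) (X : Type) (d : X -> X -> R) (m : nat) (T : fnl R X m) : Prop :=
  (forall (a : R[i]) f g pi, Dm d f pi -> Dm d g pi ->
     T (fun x => a * f x + g x) pi = a * T f pi + T g pi) /\
  (forall (a : R[i]) f pi i u v, Dm d f pi -> liploc d u -> liploc d v ->
     T f (upd pi i (fun x => a * u x + v x)) = a * T f (upd pi i u) + T f (upd pi i v)) /\
  (forall (fs : nat -> X -> R[i]) (ps : nat -> 'I_m -> X -> R[i]) f pi,
     (forall j, Dm d (fs j) (ps j)) -> Dm d f pi ->
     (forall x, cvgC (fun j => fs j x) (f x)) ->
     (forall i x, cvgC (fun j => ps j i x) (pi i x)) ->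
     (exists K, mcompact d K /\ forall j x, supp d (fs j) x -> K x) ->
     (exists L : R, forall j, lipschitz_on d (fun _ => True) L (fs j)) ->
     (forall K, mcompact d K -> exists L : R, forall j i, lipschitz_on d K L (ps j i)) ->
     cvgC (fun j => T (fs j) (ps j)) (T f pi)) /\
  (forall f pi i, Dm d f pi ->
     (exists (U : X -> Prop) (c : R[i]), mopen d U /\ (forall x, supp d f x -> U x) /\
        forall x, U x -> pi i x = c) ->
     T f pi = 0).

Definition push (R : realType) (X Y : Type) (m : nat) (phi : X -> Y) (T : fnl R X m) : fnl R Y m :=
  fun f pi => T (fun x => f (phi x)) (fun i x => pi i (phi x)).

Definition bidim (R : realType) (X : Type) (d : X -> X -> R) (Atl : chart R X -> Prop)
  (m p q : nat) (T : fnl R X m) : Prop :=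
  current d T /\
  forall f pi, Dm d f pi ->
    (exists U : X -> Prop, mopen d U /\ (forall x, supp d f x -> U x) /\
       ((exists J : {set 'I_m}, (p < #|J|)%N /\ forall j, j \in J -> hol_on Atl U (pi j)) \/
        (exists J : {set 'I_m}, (q < #|J|)%N /\
           forall j, j \in J -> hol_on Atl U (fun x => conjc (pi j x))))) ->
    T f pi = 0.

Definition dolbeault (R : realType) (X : Type) (d : X -> X -> R) (Atl : chart R X -> Prop)
  (m : nat) (S : fnl R X m) (Sp : 'I_m.+1 -> fnl R X m) : Prop :=
  (forall p : 'I_m.+1, bidim d Atl p (m - p) (Sp p)) /\
  forall f pi, Dm d f pi -> S f pi = \sum_(p < m.+1) Sp p f pi.

Definition consF (R : realType) (X : Type) (k : nat) (f : X -> R[i]) (pi : 'I_k -> X -> R[i]) :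
  'I_k.+1 -> X -> R[i] :=
  fun i => match unlift ord0 i with None => f | Some j => pi j end.

Definition cutoff (R : realType) (X : Type) (d : X -> X -> R) (f sigma : X -> R[i]) : Prop :=
  Dfun d sigma /\ exists U : X -> Prop, mopen d U /\ (forall x, supp d f x -> U x) /\
    forall x, U x -> sigma x = 1.

(* Dp is a Dolbeault decomposition of the boundary dT of T *)
Definition boundary_dolbeault (R : realType) (X : Type) (d : X -> X -> R) (Atl : chart R X -> Prop)
  (k : nat) (T : fnl R X k.+1) (Dp : 'I_k.+1 -> fnl R X k) : Prop :=
  (forall p : 'I_k.+1, bidim d Atl p (k - p) (Dp p)) /\
  forall f pi, Dm d f pi -> forall sigma, cutoff d f sigma ->
    T sigma (consF f pi) = \sum_(p < k.+1) Dp p f pi.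

Definition del_rel (R : realType) (X : Type) (d : X -> X -> R) (Atl : chart R X -> Prop)
  (k : nat) (T : fnl R X k.+1) (S : fnl R X k) : Prop :=
  exists (Tp : 'I_k.+2 -> fnl R X k.+1) (Dp : 'I_k.+2 -> 'I_k.+1 -> fnl R X k),
    dolbeault d Atl T Tp /\ (forall p, boundary_dolbeault d Atl (Tp p) (Dp p)) /\
    forall f pi, Dm d f pi ->
      S f pi = \sum_(p < k.+2 | (0 < p)%N) Dp p (inord p.-1) f pi.

Definition delbar_rel (R : realType) (X : Type) (d : X -> X -> R) (Atl : chart R X -> Prop)
  (k : nat) (T : fnl R X k.+1) (S : fnl R X k) : Prop :=
  exists (Tp : 'I_k.+2 -> fnl R X k.+1) (Dp : 'I_k.+2 -> 'I_k.+1 -> fnl R X k),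
    dolbeault d Atl T Tp /\ (forall p, boundary_dolbeault d Atl (Tp p) (Dp p)) /\
    forall f pi, Dm d f pi ->
      S f pi = \sum_(p < k.+2 | (p < k.+1)%N) Dp p (inord p) f pi.

(* Main.v *)
Require Import Defs.
From HB Require Import structures.
From mathcomp Require Import all_boot all_order all_algebra.
From mathcomp Require Import complex.
From mathcomp Require Import reals.
From mathcomp Require Import lra.
From Stdlib Require Import Classical FunctionalExtensionality.
Set Implicit Arguments. Unset Strict Implicit. Unset Printing Implicit Defensive.
Import Order.TTheory GRing.Theory Num.Theory.
Local Open Scope ring_scope.

Lemma cnorm_ge0 (R : realType) (z : R[i]) : 0 <= cnorm z.
Proof. by case: z => a b; rewrite /cnorm /= sqrtr_ge0. Qed.

Lemma cnorm_tri (R : realType) (a b : R[i]) : cnorm (a + b) <= cnorm a + cnorm b.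
Proof. exact: le_normcD. Qed.

Lemma cnorm0 (R : realType) : cnorm (0 : R[i]) = 0.
Proof. exact: Normc.normc0. Qed.

Lemma cnorm_sym (R : realType) (a b : R[i]) : cnorm (a - b) = cnorm (b - a).
Proof. by rewrite /cnorm -normcN opprB. Qed.

Lemma cnorm_le_sub (R : realType) (a b : R[i]) : cnorm a <= cnorm b + cnorm (a - b).
Proof. by have := cnorm_tri b (a - b); rewrite addrC subrK. Qed.

Lemma cnorm_sub_le (R : realType) (a b : R[i]) : cnorm (a - b) <= cnorm a + cnorm b.
Proof. by have := cnorm_tri a (- b); rewrite /cnorm normcN. Qed.

Lemma ball_open (R : realType) (X : Type) (d : X -> X -> R) (x : X) (r : R) :
  is_metric d -> mopen d (fun y => d x y < r).
Proof.
move=> [d0 [dE [dS dT]]] y hy; exists (r - d x y); split; first by lra.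
move=> z hz; have := dT x y z; lra.
Qed.

Lemma mclos_open (R : realType) (X : Type) (d : X -> X -> R) (S : X -> Prop) :
  is_metric d -> mopen d (fun x => ~ mclosure d S x).
Proof.
move=> [d0 [dE [dS dT]]] x hx.
have [r [r0 hr]] : exists r, 0 < r /\ forall y, S y -> ~ d x y < r.
  apply: NNPP => hn; apply: hx => r r0; apply: NNPP => hn2; apply: hn.
  exists r; split => // y Sy lt; apply: hn2; by exists y.
exists (r / 2); split; first by lra.
move=> y hy hcl; have [z [Sz hz]] := hcl (r / 2) ltac:(lra).
apply: (hr z Sz); have := dT x y z; lra.
Qed.

Lemma not_supp (R : realType) (X : Type) (d : X -> X -> R) (f : X -> R[i]) (x : X) :
  is_metric d -> ~ supp d f x -> f x = 0.
Proof.
move=> [d0 [dE _]] hn; apply: NNPP => hf; apply: hn => r r0.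
exists x; split; first by apply/eqP.
by have [_ ->] := dE x x.
Qed.

Lemma preim_open (R : realType) (X Y : Type) (dX : X -> X -> R) (dY : Y -> Y -> R)
  (phi : X -> Y) (V : Y -> Prop) :
  (forall x (eps : R), 0 < eps -> exists del : R, 0 < del /\
     forall y, dX x y < del -> dY (phi x) (phi y) < eps) ->
  mopen dY V -> mopen dX (fun x => V (phi x)).
Proof.
move=> hc hV x hx; have [r [r0 hr]] := hV _ hx.
have [del [del0 hd]] := hc x r r0; exists del; split => // y hy; exact/hr/hd.
Qed.

Lemma supp_comp (R : realType) (X Y : Type) (dX : X -> X -> R) (dY : Y -> Y -> R)
  (phi : X -> Y) (f : Y -> R[i]) (x : X) :
  (forall x (eps : R), 0 < eps -> exists del : R, 0 < del /\
     forall y, dX x y < del -> dY (phi x) (phi y) < eps) ->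
  supp dX (fun x => f (phi x)) x -> supp dY f (phi x).
Proof.
move=> hc hs r r0; have [del [del0 hd]] := hc x r r0.
have [y [hy hxy]] := hs del del0; exists (phi y); split => //; exact: hd.
Qed.

Lemma cpt_closed_sub (R : realType) (X : Type) (d : X -> X -> R) (K C : X -> Prop) :
  mcompact d K -> (forall x, C x -> K x) -> mopen d (fun x => ~ C x) -> mcompact d C.
Proof.
move=> hK hCK hCo I O hO hcov.
have [[x0 Cx0]|hne] := classic (exists x, C x); last first.
  have g0 : 'I_0 -> I by case=> m; rewrite ltn0.
  exists 0%N, g0 => x Cx; exfalso; apply: hne; by exists x.
have [i0 _] := hcov _ Cx0.
pose O' (o : option I) := match o with Some i => O i | None => fun x => ~ C x end.
have hO' : forall o, mopen d (O' o) by case=> [i|] /=; [exact: hO|].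
have hcov' : forall x, K x -> exists o, O' o x.
  move=> x Kx; have [Cx|nCx] := classic (C x).
    by have [i hi] := hcov _ Cx; exists (Some i).
  by exists None.
have [n [g hg]] := hK _ O' hO' hcov'.
exists n, (fun j => match g j with Some i => i | None => i0 end) => x Cx.
have [j hj] := hg x (hCK _ Cx); exists j; move: hj; by case: (g j).
Qed.

Lemma cpt_image (R : realType) (X Y : Type) (dX : X -> X -> R) (dY : Y -> Y -> R)
  (phi : X -> Y) (K : X -> Prop) :
  (forall x (eps : R), 0 < eps -> exists del : R, 0 < del /\
     forall y, dX x y < del -> dY (phi x) (phi y) < eps) ->
  mcompact dX K -> mcompact dY (fun y => exists x, K x /\ phi x = y).
Proof.
move=> hc hK I O hO hcov.
have [n [g hg]] := hK I (fun i x => O i (phi x))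
  ltac:(move=> i; exact: preim_open hc (hO i))
  ltac:(by move=> x Kx; apply: hcov; exists x).
exists n, g => y [x [Kx <-]]; exact: hg.
Qed.

Lemma cpt_bound (R : realType) (X : Type) (d : X -> X -> R) (K : X -> Prop)
  (I : Type) (h : I -> X -> R) :
  is_metric d -> mcompact d K ->
  (forall x, exists r b : R, 0 < r /\ forall i y, d x y < r -> h i y <= b) ->
  exists B : R, forall i x, K x -> h i x <= B.
Proof.
move=> hm hK hloc.
pose J := {x : X & {rb : R * R | 0 < rb.1 /\ forall i y, d x y < rb.1 -> h i y <= rb.2}}.
have hcov : forall x, K x -> exists j : J, d (projT1 j) x < (proj1_sig (projT2 j)).1.
{ move=> x Kx; have [r [b [r0 hb]]] := hloc x.
  exists (existT _ x (exist _ (r, b) (conj r0 hb))) => /=.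
  by have [_ [dE _]] := hm; have [_ ->] := dE x x. }
have [n [g hg]] := hK J (fun j y => d (projT1 j) y < (proj1_sig (projT2 j)).1)
  ltac:(move=> j; exact: ball_open) hcov.
exists (\big[Num.max/0]_(j < n) (proj1_sig (projT2 (g j))).2) => i x Kx.
have [j hj] := hg x Kx.
apply: le_trans (le_bigmax _ _ j).
case: (g j) hj => z [[r b] [r0 hb]] /= hz; exact: hb.
Qed.

Lemma cpt_lebesgue (R : realType) (X Y : Type) (dX : X -> X -> R) (dY : Y -> Y -> R)
  (phi : X -> Y) (K : X -> Prop) :
  is_metric dX -> mcompact dX K -> loc_lipschitz_map dX dY phi ->
  exists del M : R, 0 < del /\ 0 <= M /\
    forall x y, K x -> dX x y < del -> dY (phi x) (phi y) <= M * dX x y.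
Proof.
move=> hm hK hl.
have [d0 [dE [dS dT]]] := hm.
pose J := {x : X & {rL : R * R | 0 < rL.1 /\ forall y z, dX x y < rL.1 -> dX x z < rL.1 ->
   dY (phi y) (phi z) <= rL.2 * dX y z}}.
pose rr (j : J) := (proj1_sig (projT2 j)).1.
pose LL (j : J) := (proj1_sig (projT2 j)).2.
have rr0 : forall j, 0 < rr j by move=> [z [[r L] [r0 hb]]].
have hLL : forall j y z, dX (projT1 j) y < rr j -> dX (projT1 j) z < rr j ->
   dY (phi y) (phi z) <= LL j * dX y z by move=> [z [[r L] [r0 hb]]].
have hcov : forall x, K x -> exists j : J, dX (projT1 j) x < rr j / 2.
{ move=> x Kx; have [r [L [r0 hb]]] := hl x.
  pose j0 : J := existT _ x (exist _ (r, L) (conj r0 hb)).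
  exists j0; rewrite /j0 /=.
  rewrite /rr /= (proj2 (dE x x) erefl); lra. }
have [n [g hg]] := hK J (fun j y => dX (projT1 j) y < rr j / 2)
  ltac:(move=> j; exact: ball_open) hcov.
exists (\big[Num.min/1]_(j < n) (rr (g j) / 2)).
exists (\big[Num.max/0]_(j < n) Num.max (LL (g j)) 0).
split; first by apply: (big_ind (fun v => 0 < v)) => //;
  [move=> a b ha hb; rewrite lt_min ha hb | move=> j _; have := rr0 (g j); lra].
split; first by apply: (big_ind (fun v => 0 <= v)) => //;
  [move=> a b ha hb; rewrite le_max ha | move=> j _; rewrite le_max lexx orbT].
move=> x y Kx hxy; have [j hj] := hg x Kx.
have hmin := bigmin_le 1 j (fun j => rr (g j) / 2).
have h1 : dX (projT1 (g j)) y < rr (g j).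
  have := dT (projT1 (g j)) x y; lra.
have h2 : dX (projT1 (g j)) x < rr (g j) by have := rr0 (g j); lra.
apply: le_trans (hLL _ _ _ h2 h1) _.
apply: ler_wpM2r; first exact: d0.
apply: le_trans (le_bigmax _ _ j); by rewrite le_max lexx.
Qed.

Definition mcont (R : realType) (X Y : Type) (dX : X -> X -> R) (dY : Y -> Y -> R)
  (phi : X -> Y) := forall x (eps : R), 0 < eps -> exists del : R, 0 < del /\
     forall y, dX x y < del -> dY (phi x) (phi y) < eps.

Lemma compose_lip (R : realType) (X Y : Type) (dX : X -> X -> R) (dY : Y -> Y -> R)
  (phi : X -> Y) (I : Type) (F : I -> Y -> R[i]) (K : Y -> Prop) (L B : R) :
  is_metric dX -> is_metric dY -> mcompact dX (fun x => K (phi x)) ->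
  loc_lipschitz_map dX dY phi -> 0 <= L ->
  (forall i, lipschitz_on dY (fun _ => True) L (F i)) ->
  (forall i y, ~ K y -> F i y = 0) -> (forall i y, cnorm (F i y) <= B) ->
  exists L', forall i, lipschitz_on dX (fun _ => True) L' (fun x => F i (phi x)).
Proof.
move=> hmX hmY hK hl L0 hF hz hB.
have [d0 [dE [dS dT]]] := hmX.
have [e0 _] := hmY.
have [del [M [del0 [M0 hM]]]] := cpt_lebesgue hmX hK hl.
pose C := 2 * `|B| / del.
have BB : B <= `|B| := ler_norm B.
have Bp : 0 <= `|B| := normr_ge0 B.
have C0 : 0 <= C by rewrite /C; apply: divr_ge0; [apply: mulr_ge0 | apply: ltW].
have Cd : C * del = 2 * `|B| by rewrite /C divfK // gt_eqF.
have key : forall i x y, K (phi x) ->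
  cnorm (F i (phi x) - F i (phi y)) <= (L * M + C) * dX x y.
  move=> i x y Kx; have dxy := d0 x y.
  have [lt|ge] := ltP (dX x y) del.
    have h1 := hM x y Kx lt.
    have h2 := hF i (phi x) (phi y) Logic.I Logic.I.
    have h3 : L * dY (phi x) (phi y) <= L * (M * dX x y) by apply: ler_wpM2l.
    have h4 : 0 <= C * dX x y by apply: mulr_ge0.
    nra.
  have h1 := cnorm_sub_le (F i (phi x)) (F i (phi y)).
  have := hB i (phi x); have := hB i (phi y).
  have h5 : C * del <= C * dX x y by apply: ler_wpM2l.
  have h6 : 0 <= L * M * dX x y by rewrite !mulr_ge0.
  nra.
exists (L * M + C) => i x y _ _.
have [Kx|nKx] := classic (K (phi x)); first exact: key.
have [Ky|nKy] := classic (K (phi y)).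
  by rewrite cnorm_sym dS; exact: key.
rewrite !hz // subrr cnorm0; apply: mulr_ge0 => //.
by apply: addr_ge0 => //; apply: mulr_ge0.
Qed.

Lemma cvg_bounded (R : realType) (u : nat -> R[i]) (l : R[i]) :
  cvgC u l -> exists b : R, forall j, cnorm (u j) <= b.
Proof.
move=> /(_ 1 ltr01) [N hN].
exists (cnorm l + 1 + \sum_(j < N) cnorm (u j)) => j.
have hs : 0 <= \sum_(j < N) cnorm (u j) by apply: sumr_ge0 => ? _; exact: cnorm_ge0.
have [lt|ge] := ltnP j N.
  have := bigD1 (Ordinal lt) (P := predT) (F := fun j : 'I_N => cnorm (u j)) isT.
  move=> /= ->.
  have : 0 <= \sum_(i < N | i != Ordinal lt) cnorm (u i) by apply: sumr_ge0 => ? _; exact: cnorm_ge0.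
  have := cnorm_ge0 l; rewrite /=; lra.
have h1 := hN j ge; have h2 := cnorm_le_sub (u j) l; lra.
Qed.

Lemma liploc_comp (R : realType) (X Y : Type) (dX : X -> X -> R) (dY : Y -> Y -> R)
  (phi : X -> Y) (u : Y -> R[i]) :
  is_metric dY -> mcont dX dY phi -> loc_lipschitz_map dX dY phi ->
  liploc dY u -> liploc dX (fun x => u (phi x)).
Proof.
move=> [e0 _] hc hl hu x.
have [r [L [r0 hL]]] := hu (phi x).
have [del [del0 hd]] := hc x r r0.
have [r2 [L2 [r20 hL2]]] := hl x.
exists (Num.min del r2), (Num.max L 0 * L2); split; first by rewrite lt_min del0.
move=> y z hy hz; rewrite lt_min in hy; rewrite lt_min in hz.
case/ssrbool.andP: hy => hy1 hy2; case/ssrbool.andP: hz => hz1 hz2.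
have h1 := hL _ _ (hd _ hy1) (hd _ hz1).
have h2 := hL2 _ _ hy2 hz2.
have hLm : L <= Num.max L 0 by rewrite le_max lexx.
have hLp : 0 <= Num.max L 0 by rewrite le_max lexx orbT.
have h3 := e0 (phi y) (phi z).
have h4 : Num.max L 0 * dY (phi y) (phi z) <= Num.max L 0 * (L2 * dX y z) by apply: ler_wpM2l.
rewrite -mulrA; nra.
Qed.

Lemma phi_lip_cpt (R : realType) (X Y : Type) (dX : X -> X -> R) (dY : Y -> Y -> R)
  (phi : X -> Y) (K : X -> Prop) :
  is_metric dX -> is_metric dY -> mcont dX dY phi -> loc_lipschitz_map dX dY phi ->
  mcompact dX K ->
  exists M : R, 0 <= M /\ forall x y, K x -> K y -> dY (phi x) (phi y) <= M * dX x y.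
Proof.
move=> hmX hmY hc hl hK.
have [d0 [dE [dS dT]]] := hmX.
have [e0 [eE [eS eT]]] := hmY.
have [del [M [del0 [M0 hM]]]] := cpt_lebesgue hmX hK hl.
have [[x0 Kx0]|hne] := classic (exists x, K x); last first.
  exists 0; split => // x y Kx; exfalso; apply: hne; by exists x.
have hloc : forall x, exists r b : R, 0 < r /\ forall (i : unit) y, dX x y < r ->
    dY (phi x0) (phi y) <= b.
  move=> x; have [del1 [del10 hd]] := hc x 1 ltr01.
  exists del1, (dY (phi x0) (phi x) + 1); split => // _ y hy.
  have := eT (phi x0) (phi x) (phi y); have := hd y hy; lra.
have [B hB] := cpt_bound (h := fun _ y => dY (phi x0) (phi y)) hmX hK hloc.
have Bp : 0 <= B by apply: le_trans (hB tt x0 Kx0); exact: e0.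
exists (M + 2 * B / del); split.
  by apply: addr_ge0 => //; apply: divr_ge0; [apply: mulr_ge0|apply: ltW].
move=> x y Kx Ky; have dxy := d0 x y.
have C0 : 0 <= 2 * B / del by apply: divr_ge0; [apply: mulr_ge0|apply: ltW].
have Cd : 2 * B / del * del = 2 * B by rewrite divfK // gt_eqF.
have [lt|ge] := ltP (dX x y) del.
  have := hM x y Kx lt; have : 0 <= 2 * B / del * dX x y by apply: mulr_ge0.
  nra.
have h1 := hB tt x Kx; have h2 := hB tt y Ky; have := eT (phi x) (phi x0) (phi y).
rewrite (eS (phi x) (phi x0)) => h3 /=.
have h5 : 2 * B / del * del <= 2 * B / del * dX x y by apply: ler_wpM2l.
have h6 : 0 <= M * dX x y by apply: mulr_ge0.
simpl in h1, h2; nra.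
Qed.

Lemma Dfun_comp (R : realType) (X Y : Type) (dX : X -> X -> R) (dY : Y -> Y -> R)
  (phi : X -> Y) (f : Y -> R[i]) :
  is_metric dX -> is_metric dY -> mcont dX dY phi -> proper_map dX dY phi ->
  loc_lipschitz_map dX dY phi ->
  Dfun dY f -> Dfun dX (fun x => f (phi x)).
Proof.
move=> hmX hmY hc hp hl [[L hL] hK].
have hL' : lipschitz_on dY (fun _ => True) (Num.max L 0) f.
  move=> x y _ _; apply: le_trans (hL x y Logic.I Logic.I) _.
  by apply: ler_wpM2r; [case: hmY|rewrite le_max lexx].
have hloc : forall x, exists r b : R, 0 < r /\ forall (i : unit) y, dY x y < r ->
    cnorm (f y) <= b.
  move=> x; exists 1, (cnorm (f x) + Num.max L 0); split => // _ y hy.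
  have := hL' y x Logic.I Logic.I; have := cnorm_le_sub (f y) (f x).
  have [e0 [_ [eS _]]] := hmY; rewrite eS in hy.
  have : Num.max L 0 * dY y x <= Num.max L 0 * 1.
    by apply: ler_wpM2l; [rewrite le_max lexx orbT|apply: ltW].
  lra.
have [B hB] := cpt_bound (h := fun _ y => cnorm (f y)) hmY hK hloc.
have hpK := hp _ hK.
have hLp : 0 <= Num.max L 0 by rewrite le_max lexx orbT.
have hz : forall (i : unit) y, ~ supp dY f y -> f y = 0.
  move=> _ y hy; exact: not_supp hmY hy.
have hB' : forall (i : unit) y, cnorm (f y) <= Num.max B 0.
  move=> _ y; have [Ky|nKy] := classic (supp dY f y).
    by apply: le_trans (hB tt y Ky) _; rewrite le_max lexx.
  by rewrite (not_supp hmY nKy) cnorm0 le_max lexx orbT.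
have [L' hL''] := compose_lip (F := fun _ => f) hmX hmY hpK hl hLp (fun _ => hL') hz hB'.
split; first by exists L'; exact: hL'' tt.
apply: cpt_closed_sub hpK _ _.
+ move=> x; exact: supp_comp hc.
+ exact: (@mclos_open R X dX (fun x => f (phi x) != 0) hmX).
Qed.

Lemma Dm_comp (R : realType) (X Y : Type) (dX : X -> X -> R) (dY : Y -> Y -> R)
  (phi : X -> Y) (m : nat) (f : Y -> R[i]) (pi : 'I_m -> Y -> R[i]) :
  is_metric dX -> is_metric dY -> mcont dX dY phi -> proper_map dX dY phi ->
  loc_lipschitz_map dX dY phi ->
  Dm dY f pi -> Dm dX (fun x => f (phi x)) (fun i x => pi i (phi x)).
Proof.
move=> hmX hmY hc hp hl [hf hpi]; split; first exact: (Dfun_comp hmX hmY hc hp hl hf).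
move=> i; exact: (liploc_comp hmY hc hl (hpi i)).
Qed.

Lemma upd_comp (R : realType) (X Y : Type) (phi : X -> Y) (m : nat)
  (pi : 'I_m -> Y -> R[i]) (i : 'I_m) (w : Y -> R[i]) :
  (fun j x => upd pi i w j (phi x)) = upd (fun j x => pi j (phi x)) i (fun x => w (phi x)).
Proof. apply: functional_extensionality => j; rewrite /upd; by case: (j == i). Qed.

Lemma consF_comp (R : realType) (X Y : Type) (phi : X -> Y) (k : nat)
  (f : Y -> R[i]) (pi : 'I_k -> Y -> R[i]) :
  (fun i x => consF f pi i (phi x)) = consF (fun x => f (phi x)) (fun i x => pi i (phi x)).
Proof. apply: functional_extensionality => j; rewrite /consF; by case: (unlift ord0 j). Qed.

Lemma push_current (R : realType) (X Y : Type) (dX : X -> X -> R) (dY : Y -> Y -> R)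
  (phi : X -> Y) (m : nat) (T : fnl R X m) :
  is_metric dX -> is_metric dY -> mcont dX dY phi -> proper_map dX dY phi ->
  loc_lipschitz_map dX dY phi ->
  current dX T -> current dY (push phi T).
Proof.
move=> hmX hmY hc hp hl [hlin1 [hlin2 [hcont hloc]]].
have DC := fun f pi (h : Dm dY f pi) => Dm_comp hmX hmY hc hp hl h.
split.
  move=> a f g pi hf hg; rewrite /push; exact (hlin1 a (fun x => f (phi x)) (fun x => g (phi x)) (fun i x => pi i (phi x)) (DC _ _ _ hf) (DC _ _ _ hg)).
split.
  move=> a f pi i u v hf hu hv; rewrite /push !upd_comp.
  exact: (hlin2 a _ _ i _ _ (DC _ _ _ hf) (liploc_comp hmY hc hl hu) (liploc_comp hmY hc hl hv)).
split.
  move=> fs ps f pi hD hDf hcf hcp [K [hK hsK]] [L hL] hps.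
  apply: (hcont (fun j x => fs j (phi x)) (fun j i x => ps j i (phi x))).
  - move=> j; exact: DC.
  - exact: DC.
  - by move=> x; apply: hcf.
  - by move=> i x; apply: hcp.
  - exists (fun x => K (phi x)); split; first exact: hp.
    move=> j x hx; apply: hsK; exact: supp_comp hc hx.
  - have hL' : forall j, lipschitz_on dY (fun _ => True) (Num.max L 0) (fs j).
      move=> j x y _ _; apply: le_trans (hL j x y Logic.I Logic.I) _.
      by apply: ler_wpM2r; [case: hmY|rewrite le_max lexx].
    have hLp : 0 <= Num.max L 0 by rewrite le_max lexx orbT.
    have hloc' : forall y, exists r b : R, 0 < r /\ forall (j : nat) z, dY y z < r ->
        cnorm (fs j z) <= b.
      move=> y; have [b hb] := cvg_bounded (hcf y).
      exists 1, (b + Num.max L 0); split => // j z hz.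
      have := hL' j z y Logic.I Logic.I; have := cnorm_le_sub (fs j z) (fs j y).
      have := hb j.
      have [e0 [_ [eS _]]] := hmY; rewrite eS in hz.
      have : Num.max L 0 * dY z y <= Num.max L 0 * 1.
        by apply: ler_wpM2l => //; apply: ltW.
      lra.
    have [B hB] := cpt_bound hmY hK hloc'.
    have hz : forall (j : nat) y, ~ K y -> fs j y = 0.
      move=> j y hy; apply: (not_supp hmY); move=> hs; exact: hy (hsK j y hs).
    have hB' : forall (j : nat) y, cnorm (fs j y) <= Num.max B 0.
      move=> j y; have [Ky|nKy] := classic (K y).
        by apply: le_trans (hB j y Ky) _; rewrite le_max lexx.
      by rewrite (hz j y nKy) cnorm0 le_max lexx orbT.
    exact: (compose_lip hmX hmY (hp _ hK) hl hLp hL' hz hB').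
  - move=> K2 hK2.
    have [L1 hL1] := hps _ (cpt_image hc hK2).
    have [M [M0 hM]] := phi_lip_cpt hmX hmY hc hl hK2.
    exists (Num.max L1 0 * M) => j i x y K2x K2y.
    have h1 := hL1 j i (phi x) (phi y) (ex_intro _ x (conj K2x erefl))
      (ex_intro _ y (conj K2y erefl)).
    have [e0 _] := hmY; have h2 := e0 (phi x) (phi y).
    have h3 : L1 * dY (phi x) (phi y) <= Num.max L1 0 * dY (phi x) (phi y).
      by apply: ler_wpM2r => //; rewrite le_max lexx.
    have h4 : Num.max L1 0 * dY (phi x) (phi y) <= Num.max L1 0 * (M * dX x y).
      by apply: ler_wpM2l; [rewrite le_max lexx orbT | exact: hM].
    rewrite -mulrA; lra.
move=> f pi i hD [U [c [hU [hsU hcU]]]].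
apply: (hloc _ _ i (DC _ _ _ hD)).
exists (fun x => U (phi x)), c; split; first exact: preim_open hc hU.
split; first by move=> x hx; apply: hsU; exact: supp_comp hc hx.
by move=> x hx; apply: hcU.
Qed.

Lemma bidim_push (R : realType) (X Y : Type)
  (dX : X -> X -> R) (AX : chart R X -> Prop)
  (dY : Y -> Y -> R) (AY : chart R Y -> Prop)
  (phi : X -> Y) (m p q : nat) (T : fnl R X m) :
  is_metric dX -> is_metric dY -> hol_map dX AX dY AY phi -> proper_map dX dY phi ->
  loc_lipschitz_map dX dY phi ->
  bidim dX AX p q T -> bidim dY AY p q (push phi T).
Proof.
move=> hmX hmY [hc hh] hp hl [hcur hb]; split; first exact: (push_current hmX hmY hc hp hl hcur).
move=> f pi hD [U [hU [hsU hJ]]].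
apply: hb; first exact: (Dm_comp hmX hmY hc hp hl hD).
exists (fun x => U (phi x)); split; first exact: preim_open hc hU.
split; first by move=> x hx; apply: hsU; exact: supp_comp hc hx.
case: hJ => [[J [hJ hJh]]|[J [hJ hJh]]]; [left|right]; exists J; split => // j hj.
  exact: (hh U (pi j) hU (hJh j hj)).
exact: (hh U (fun y => conjc (pi j y)) hU (hJh j hj)).
Qed.

Lemma cutoff_push (R : realType) (X Y : Type) (dX : X -> X -> R) (dY : Y -> Y -> R)
  (phi : X -> Y) (f sigma : Y -> R[i]) :
  is_metric dX -> is_metric dY -> mcont dX dY phi -> proper_map dX dY phi ->
  loc_lipschitz_map dX dY phi ->
  cutoff dY f sigma -> cutoff dX (fun x => f (phi x)) (fun x => sigma (phi x)).
Proof.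
move=> hmX hmY hc hp hl [hs [U [hU [hsU h1]]]]; split; first exact: (Dfun_comp hmX hmY hc hp hl hs).
exists (fun x => U (phi x)); split; first exact: preim_open hc hU.
split; first by move=> x hx; apply: hsU; exact: supp_comp hc hx.
by move=> x hx; apply: h1.
Qed.

Lemma dolbeault_push (R : realType) (X Y : Type)
  (dX : X -> X -> R) (AX : chart R X -> Prop)
  (dY : Y -> Y -> R) (AY : chart R Y -> Prop)
  (phi : X -> Y) (m : nat) (T : fnl R X m) Tp :
  is_metric dX -> is_metric dY -> hol_map dX AX dY AY phi -> proper_map dX dY phi ->
  loc_lipschitz_map dX dY phi ->
  dolbeault dX AX T Tp -> dolbeault dY AY (push phi T) (fun p => push phi (Tp p)).
Proof.
move=> hmX hmY hH hp hl [hTp hsum]; split.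
  move=> p; exact: (bidim_push hmX hmY hH hp hl).
move=> f pi hD; rewrite /push hsum //; exact: Dm_comp hmX hmY hH.1 hp hl hD.
Qed.

Lemma boundary_push (R : realType) (X Y : Type)
  (dX : X -> X -> R) (AX : chart R X -> Prop)
  (dY : Y -> Y -> R) (AY : chart R Y -> Prop)
  (phi : X -> Y) (k : nat) (T : fnl R X k.+1) Dp :
  is_metric dX -> is_metric dY -> hol_map dX AX dY AY phi -> proper_map dX dY phi ->
  loc_lipschitz_map dX dY phi ->
  boundary_dolbeault dX AX T Dp ->
  boundary_dolbeault dY AY (push phi T) (fun p => push phi (Dp p)).
Proof.
move=> hmX hmY hH hp hl [hDp hsum]; split.
  move=> p; exact: (bidim_push hmX hmY hH hp hl).
move=> f pi hD sigma hcut; rewrite /push consF_comp hsum //.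
  exact: Dm_comp hmX hmY hH.1 hp hl hD.
exact: cutoff_push hmX hmY hH.1 hp hl hcut.
Qed.

Theorem proposition3p4 (R : realType) (X Y : Type)
  (dX : X -> X -> R) (AX : chart R X -> Prop)
  (dY : Y -> Y -> R) (AY : chart R Y -> Prop)
  (phi : X -> Y) (k : nat) (T : fnl R X k.+1) (S S' : fnl R X k) :
  complex_space dX AX -> complex_space dY AY ->
  hol_map dX AX dY AY phi -> proper_map dX dY phi -> loc_lipschitz_map dX dY phi ->
  current dX T ->
  del_rel dX AX T S -> delbar_rel dX AX T S' ->
  del_rel dY AY (push phi T) (push phi S) /\ delbar_rel dY AY (push phi T) (push phi S').
Proof.
move=> [hmX _] [hmY _] hH hp hl _ [Tp [Dp [hdol [hbd hS]]]] [Tp' [Dp' [hdol' [hbd' hS']]]].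
split.
  exists (fun p => push phi (Tp p)), (fun p q => push phi (Dp p q)).
  split; first exact: (dolbeault_push hmX hmY hH hp hl).
  split; first by move=> p; exact: (boundary_push hmX hmY hH hp hl).
  move=> f pi hD; rewrite /push hS //; exact: Dm_comp hmX hmY hH.1 hp hl hD.
exists (fun p => push phi (Tp' p)), (fun p q => push phi (Dp' p q)).
split; first exact: (dolbeault_push hmX hmY hH hp hl).
split; first by move=> p; exact: (boundary_push hmX hmY hH hp hl).
move=> f pi hD; rewrite /push hS' //; exact: Dm_comp hmX hmY hH.1 hp hl hD.
Qed.
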